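(* Let $n$ be a positive integer and $N = n^2+n+1$. The equation $a^2+ab+b^2 = N$ has a solution in positive integers $(a,b)$ with $(a,b) \notin \{(n,1),(1,n)\}$ if and only if $N$ has at least two prime factors, counted with multiplicity, congruent to $1 \pmod 3$.
   Context: ''Counted with multiplicity'' means: if $N=\prod p^{e_p}$, the number of such factors is $\sum_{p\equiv 1 \ (\mathrm{mod}\ 3)} e_p$. *)

(* Defs.v *)
From mathcomp Require Import all_boot.
Set Implicit Arguments. Unset Strict Implicit. Unset Printing Implicit Defensive.

Definition count_1mod3_factors (N : nat) : nat :=
  \sum_(p <- primes N | p %% 3 == 1) logn p N.

(* Main.v *)
Require Import Defs.
From mathcomp Require Import all_boot.
From mathcomp Require Import zify.
From Stdlib Require Import Classical_Prop.
Set Implicit Arguments. Unset Strict Implicit. Unset Printing Implicit Defensive.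

Lemma mod3_form a b : 3 %| a*a + a*b + b*b -> a %% 3 = b %% 3.
Proof.
have ea := divn_eq a 3; have eb := divn_eq b 3.
have := ltn_pmod a (isT : 0 < 3); have := ltn_pmod b (isT : 0 < 3).
move: (a %/ 3) (b %/ 3) (a %% 3) (b %% 3) ea eb => q q' r r' -> -> hr' hr.
have -> : (q * 3 + r) * (q * 3 + r) + (q * 3 + r) * (q' * 3 + r') + (q' * 3 + r') * (q' * 3 + r')
  = 3 * (3*q*q + 2*q*r + 3*q*q' + q*r' + q'*r + 3*q'*q' + 2*q'*r') + (r*r + r*r' + r'*r') by lia.
rewrite dvdn_addr; last by apply: dvdn_mulr.
by case: r hr => [|[|[|]]] //; case: r' hr' => [|[|[|]]].
Qed.

Lemma n_mod3 n : 3 %| n*n + n + 1 -> n %% 3 = 1.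
Proof.
have ea := divn_eq n 3.
have := ltn_pmod n (isT : 0 < 3).
move: (n %/ 3) (n %% 3) ea => q r -> hr.
have -> : (q * 3 + r) * (q * 3 + r) + (q * 3 + r) + 1
  = 3 * (3*q*q + 2*q*r + q) + (r*r + r + 1) by lia.
rewrite dvdn_addr; last by apply: dvdn_mulr.
by case: r hr => [|[|[|]]].
Qed.

Lemma not9 n : ~~ (9 %| n*n + n + 1).
Proof.
have ea := divn_eq n 9.
have := ltn_pmod n (isT : 0 < 9).
move: (n %/ 9) (n %% 9) ea => q r -> hr.
have -> : (q * 9 + r) * (q * 9 + r) + (q * 9 + r) + 1
  = 9 * (9*q*q + 2*q*r + q) + (r*r + r + 1) by lia.
rewrite dvdn_addr; last by apply: dvdn_mulr.
by case: r hr => [|[|[|[|[|[|[|[|[|]]]]]]]]].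
Qed.

Lemma N_odd n : odd (n*n + n + 1).
Proof. by rewrite addn1 /= oddD oddM; case: (odd n). Qed.

Lemma prime_div_N p n : prime p -> p %| n*n + n + 1 -> p != 3 -> p %% 3 = 1.
Proof.
move=> pp hp p3.
have hf := fermat_little n pp.
have p2 : 1 < p by apply: prime_gt1.
have := ltn_pmod p (isT : 0 < 3).
case E: (p %% 3) => [|[|[|//]]] _ //.
- have : 3 %| p by apply/eqP.
  by rewrite dvdn_prime2 //; move/eqP => h; rewrite -h eqxx in p3.
- have hn3 : n ^ 3 = (n - 1) * (n*n + n + 1) + 1.
    case: n {hf} hp => [|m] hp.
      by rewrite /= dvdn1 in hp; rewrite (eqP hp) in pp.
    rewrite subn1 /= !expnS expn0. nia.
  have hp' : p = 3 * (p %/ 3) + 2 by rewrite {1}(divn_eq p 3) E; lia.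
  have h1 : n ^ 3 = 1 %[mod p].
    by rewrite hn3; case/dvdnP: (hp) => k ->; rewrite mulnA modnMDl.
  have h2 : n ^ p = n ^ 2 %[mod p].
    by rewrite {1}hp' expnD expnM -modnMml -modnXm h1 modnXm modnMml exp1n mul1n.
  have h3 : n * n = n %[mod p] by rewrite -hf h2.
  have h4 : p %| n * (n - 1).
    rewrite mulnBr muln1 -eqn_mod_dvd; last by case: (n) => // m; rewrite leq_pmulr.
    by rewrite h3.
  rewrite Euclid_dvdM // in h4; case/orP: h4 => h4.
  + have : p %| 1.
      have -> : 1 = (n*n+n+1) - n * (n + 1) by clear; lia.
      by rewrite dvdn_sub // dvdn_mulr.
    by rewrite dvdn1 => /eqP h; rewrite h in pp.
  + have n0 : 0 < n.
      by case: (n) hp => // hp; rewrite /= dvdn1 in hp; rewrite (eqP hp) in pp.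
    have : p %| 3.
      have -> : 3 = (n*n+n+1) - (n - 1) * (n + 2) by clear -n0; nia.
      by rewrite dvdn_sub // dvdn_mulr.
    by rewrite dvdn_prime2 // => /eqP h; rewrite h eqxx in p3.
Qed.

Lemma count_ge2 N p r : 0 < N -> prime p -> prime r -> p %% 3 = 1 -> r %% 3 = 1 ->
  p * r %| N -> 2 <= count_1mod3_factors N.
Proof.
move=> N0 pp pr p1 r1 hd.
have pN : p %| N by apply: dvdn_trans hd; apply: dvdn_mulr.
have rN : r %| N by apply: dvdn_trans hd; apply: dvdn_mull.
have pin : p \in primes N by rewrite mem_primes pp N0.
have rin : r \in primes N by rewrite mem_primes pr N0.
rewrite /count_1mod3_factors -big_filter.
have U := primes_uniq N.
have pin' : p \in [seq x <- primes N | x %% 3 == 1] by rewrite mem_filter p1 eqxx.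
rewrite (bigD1_seq _ pin') ?filter_uniq //=.
case: (eqVneq p r) => [epr | npr].
- subst r.
  have : 2 <= logn p N by rewrite -pfactor_dvdn // expnS expn1.
  move=> h; apply: leq_trans h _; exact: leq_addr.
- have rin' : r \in [seq x <- [seq x <- primes N | x %% 3 == 1] | x != p].
    by rewrite !mem_filter rin r1 eqxx eq_sym npr.
  rewrite -big_filter (bigD1_seq _ rin') ?filter_uniq //=.
  have h1 : 1 <= logn p N by rewrite -pfactor_dvdn // expn1.
  have h2 : 1 <= logn r N by rewrite -pfactor_dvdn // expn1.
  lia.
Qed.

Lemma count_ge2_inv N : 0 < N -> 2 <= count_1mod3_factors N ->
  exists p r, [/\ prime p, prime r, p %% 3 = 1, r %% 3 = 1 & p * r %| N].
Proof.
move=> N0; rewrite /count_1mod3_factors -big_filter.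
have U : uniq [seq x <- primes N | x %% 3 == 1] by rewrite filter_uniq // primes_uniq.
have M : forall x, x \in [seq x <- primes N | x %% 3 == 1] -> [/\ prime x, x %| N & x %% 3 = 1].
  by move=> x; rewrite mem_filter mem_primes => /andP [/eqP h /and3P [pp _ d]].
move: U M; case: [seq x <- primes N | x %% 3 == 1] => [|p s]; first by rewrite big_nil.
move=> /= /andP [ps us] M; rewrite big_cons.
have [pp pN p1] := M p (mem_head _ _).
case: (leqP 2 (logn p N)) => hl.
  move=> _; exists p, p; split=> //; have -> : p * p = p ^ 2 by rewrite expnS expn1.
  by rewrite pfactor_dvdn.
have hl1 : logn p N <= 1 by lia.
move: ps us M; case: s => [|r s']; first by rewrite big_nil; lia.
move=> ps _ M _.
have [pr rN r1] := M r ltac:(by rewrite !inE eqxx orbT).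
exists p, r; split=> //.
rewrite Gauss_dvd ?pN ?rN //.
rewrite prime_coprime // dvdn_prime2 //; apply: contra ps => /eqP ->; exact: mem_head.
Qed.
Lemma cancel_prime q x y S : prime q -> x * S = y * S %[mod q] -> q %| S \/ x = y %[mod q].
Proof.
move=> pq.
wlog le : x y / y <= x.
  move=> W; case: (leqP y x) => h; first exact: W.
  move=> e; case: (W y x (ltnW h) (esym e)) => [|e']; [by left | by right].
move/eqP; rewrite eqn_mod_dvd ?leq_mul2r ?le ?orbT // -mulnBl Euclid_dvdM //.
case/orP=> h; [right | by left].
by apply/eqP; rewrite eqn_mod_dvd.
Qed.

Lemma G1 n a b q S : q %| n*n + n + 1 -> a*S + b*b = (n*n+n+1) + a*b*n ->
 b*n*S + b*b = a*b*n + b*b*(n*n+n+1) -> a * S = b * n * S %[mod q].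
Proof.
move=> qN F1 F2.
  apply/eqP; rewrite -(eqn_modDr (b*b)) F1 F2.
  by case/dvdnP: (qN) => k ->; rewrite mulnA modnMDl addnC modnMDl.
Qed.
Lemma G2 n a b q S : q %| n*n + n + 1 -> q %| S -> b + n * S = a * n + b * (n*n+n+1) -> b = a * n %[mod q].
Proof.
move=> qN qS F3.
have : b + n * S = a * n %[mod q].
  by rewrite F3; case/dvdnP: (qN) => k ->; rewrite mulnA addnC modnMDl.
case/dvdnP: qS => k hk; rewrite hk mulnA => <-; rewrite [in RHS]addnC modnMDl. reflexivity.
Qed.

Lemma FF1 n a b S : a + b*n + b = S -> a * a + a * b + b * b = n * n + n + 1 -> a*S + b*b = (n*n+n+1) + a*b*n.
Proof. move=> <- H; nia. Qed.
Lemma FF2 n a b S : a + b*n + b = S -> b*n*S + b*b = a*b*n + b*b*(n*n+n+1).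
Proof. move=> <-; lia. Qed.
Lemma FF3 n a b S : a + b*n + b = S -> b + n * S = a * n + b * (n*n+n+1).
Proof. move=> <-; lia. Qed.

Lemma cong_q n a b q : prime q -> q %| n*n + n + 1 -> a*a + a*b + b*b = n*n + n + 1 ->
  a = b * n %[mod q] \/ b = a * n %[mod q].
Proof.
move=> pq qN H.
move eS: (a + b*n + b) => S.
have G := G1 qN (FF1 eS H) (FF2 eS).
case: (cancel_prime pq G) => [qS|]; last by left.
by right; apply: (G2 qN qS (FF3 eS)).
Qed.

Lemma cong_3 n a b : 3 %| n*n + n + 1 -> a*a + a*b + b*b = n*n + n + 1 ->
  a = b * n %[mod 3] /\ b = a * n %[mod 3].
Proof.
move=> h3 H.
have n1 := n_mod3 h3.
have ab : a %% 3 = b %% 3 by apply: mod3_form; rewrite H; exact h3.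
by split; rewrite -modnMmr n1 muln1 ab.
Qed.
Lemma bnd1 n a b : 0 < b -> a*a + a*b + b*b = n*n + n + 1 -> a < n*n+n+1.
Proof. move=> hb H; nia. Qed.
Lemma bnd2 n a b : 0 < a -> a*a + a*b + b*b = n*n + n + 1 -> b * n < n*n+n+1.
Proof.
move=> ha H.
case: (leqP b n) => h.
- have : b * n <= n * n by apply: leq_mul.
  lia.
- have : b * n <= b * b by apply: leq_mul => //; apply: ltnW.
  nia.
Qed.
Lemma sq1 n b : b*n*(b*n) + b*n*b + b*b = n*n + n + 1 -> b = 1.
Proof.
move=> H.
have : b*b * (n*n+n+1) = 1 * (n*n+n+1) by rewrite -{2}H; lia.
move/eqP; rewrite eqn_pmul2r ?addn1 // muln_eq1 => /andP [/eqP -> _] //.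
Qed.

Lemma small_q N q : q %| N -> 0 < q -> ~~ (3 %| q) ->
  (forall p r, prime p -> prime r -> p != 3 -> r != 3 -> ~~ (p * r %| N)) ->
  q = 1 \/ (prime q /\ q != 3).
Proof.
move=> qN q0 q3 NP.
case: (ltngtP q 1) => [q1|q1|->]; [by case: q q0 q1 {qN q3} | | by left].
have pp := pdiv_prime q1; have pq := pdiv_dvd q.
set p := pdiv q in pp pq.
have p3 : p != 3 by apply: contraNneq q3 => <-.
have eq : q = q %/ p * p by rewrite divnK.
case: (ltngtP (q %/ p) 1) => [h|h|h].
- by move: eq; case: (q %/ p) h => // _ E; rewrite E in q0.
- have pr := pdiv_prime h; have rq := pdiv_dvd (q %/ p).
  set r := pdiv (q %/ p) in pr rq.
  have rq' : r %| q by rewrite eq; apply: dvdn_mulr.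
  have r3 : r != 3 by apply: contraNneq q3 => <-.
  have : p * r %| N.
    apply: dvdn_trans qN; rewrite [in X in _ %| X]eq (mulnC (q %/ p)).
    by rewrite dvdn_pmul2l ?prime_gt0.
  by move=> h'; move: (NP p r pp pr p3 r3); rewrite h'.
- right; rewrite eq h mul1n; split=> //.
Qed.

Lemma structure n :
  (forall p r, prime p -> prime r -> p != 3 -> r != 3 -> ~~ (p * r %| n*n+n+1)) ->
  exists m q, [/\ n*n+n+1 = m * q, m = 1 \/ m = 3 & q = 1 \/ (prime q /\ q != 3)].
Proof.
move=> NP.
have N0 : 0 < n*n+n+1 by rewrite addn1.
case h3: (3 %| n*n+n+1).
- exists 3, ((n*n+n+1) %/ 3); split; [by rewrite mulnC divnK | by right |].
  apply: (small_q (N:=n*n+n+1)) => //.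
  + by apply/dvdnP; exists 3; rewrite mulnC divnK.
  + rewrite divn_gt0 //; exact: dvdn_leq N0 h3.
  + apply/negP => h; have := not9 n.
    have -> : 9 = 3 * 3 by [].
    by rewrite -(divnK h3) mulnC dvdn_pmul2l // h.
- exists 1, (n*n+n+1); split; [by rewrite mul1n | by left |].
  apply: (small_q (N:=n*n+n+1)) => //.
  by rewrite h3.
Qed.

Lemma rep_trivial n a b m q : 0 < a -> 0 < b -> a*a+a*b+b*b = n*n+n+1 ->
  n*n+n+1 = m*q -> (m = 1 \/ m = 3) -> (q = 1 \/ (prime q /\ q != 3)) ->
  (a = n /\ b = 1) \/ (a = 1 /\ b = n).
Proof.
move=> a0 b0 H E hm hq.
have Hm : a = b * n %[mod m] /\ b = a * n %[mod m].
  case: hm => hm; subst m; first by rewrite !modn1.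
  apply: cong_3 H; rewrite E; exact: dvdn_mulr.
have Hq : a = b * n %[mod q] \/ b = a * n %[mod q].
  case: hq => [hq|[pq _]]; first by subst q; left; rewrite !modn1.
  apply: cong_q H => //; rewrite E; exact: dvdn_mull.
have co : coprime m q.
  case: hm => ->; first exact: coprime1n.
  case: hq => [->|[pq q3]]; first exact: coprimen1.
  by rewrite prime_coprime // dvdn_prime2 // eq_sym.
case: Hq => Hq.
- have : a == b * n %[mod n*n+n+1] by rewrite E chinese_remainder // Hq (proj1 Hm) !eqxx.
  rewrite !modn_small ?(bnd1 b0 H) ?(bnd2 a0 H) // => /eqP ab.
  left; have b1 : b = 1 by apply: (sq1 (n:=n)); rewrite -ab.
  by split=> //; rewrite ab b1 mul1n.
- have H' : b*b + b*a + a*a = n*n+n+1 by rewrite -H; lia.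
  have : b == a * n %[mod n*n+n+1] by rewrite E chinese_remainder // Hq (proj2 Hm) !eqxx.
  rewrite !modn_small ?(bnd1 a0 H') ?(bnd2 b0 H') // => /eqP ab.
  right; have a1 : a = 1 by apply: (sq1 (n:=n)); rewrite -ab.
  by split=> //; rewrite ab a1 mul1n.
Qed.
Lemma par A B n : A*A + A*B + B*B = 2*(n*n+n+1) -> False.
Proof.
move=> H.
have : odd (A*A + A*B + B*B) = false by rewrite H mul2n odd_double.
rewrite !oddD !oddM.
have eA := odd_double_half A; have eB := odd_double_half B.
case oA: (odd A) eA; case oB: (odd B) eB => //= eB eA _.
move: (A./2) (B./2) eA eB => a b eA eB.
rewrite add0n -!mul2n in eA eB; subst A B.
have : n*n+n+1 = 2 * (a*a + a*b + b*b) by lia.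
move=> e; have := N_odd n; rewrite e mul2n odd_double //.
Qed.


From mathcomp Require Import all_order all_algebra.
From mathcomp Require Import ring.
Import GRing.Theory Num.Theory Order.TTheory.

Section S.
Local Open Scope ring_scope.

Lemma Qpos (x y : int) : (x != 0) || (y != 0) -> 0 < x*x + x*y + y*y.
Proof. case/orP => /eqP h; nia. Qed.

Lemma Qsmall (n : nat) (x y : int) : -(n%:Z) <= x <= n%:Z -> -(n%:Z) <= y <= n%:Z ->
  x * y <= 0 -> x*x + x*y + y*y <= n%:Z * n%:Z.
Proof.
move=> /andP [h1 h2] /andP [h3 h4] h.
have hx2 : x * x <= n%:Z * n%:Z by nia.
have hy2 : y * y <= n%:Z * n%:Z by nia.
case: (lerP (y * (x + y)) 0) => h5; first nia.
case: (lerP (x * (x + y)) 0) => h6; first nia.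
case: (lerP 0 (x + y)) => h7; nia.
Qed.

Lemma Qbig (n : nat) (x y : int) : -(n%:Z) <= x <= n%:Z -> -(n%:Z) <= y <= n%:Z ->
  x*x + x*y + y*y <= 3 * (n%:Z * n%:Z).
Proof. move=> /andP [h1 h2] /andP [h3 h4]; nia. Qed.

Lemma keyK (n M p : nat) (x y s t : int) :
  (M * p = n*n+n+1)%N ->
  x + (n*n+1)%N%:Z * y = s * M%:Z -> x + (n+1)%N%:Z * y = t * p%:Z ->
  x*x + x*y + y*y = (n*n+n+1)%N%:Z * (((n*n+1)%N%:Z - n%:Z) * y * y + s * t - s * M%:Z * y).
Proof.
move=> hN hx hy.
have e : x*x + x*y + y*y = (n*n+n+1)%N%:Z * (n*n+1)%N%:Z * y * y
   + (x + (n*n+1)%N%:Z * y) * (x + (n+1)%N%:Z * y)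
   - (n*n+n+1)%N%:Z * y * (x + (n*n+1)%N%:Z * y) - (n*n+n+1)%N%:Z * n%:Z * y * y.
  rewrite !PoszD !PoszM; ring.
rewrite e hx hy -hN PoszM; ring.
Qed.


Lemma fin (n M p A B : nat) (s t K : int) : (0 < A)%N -> (0 < B)%N ->
  A%:Z + (n*n+1)%N%:Z * B%:Z = s * M%:Z -> A%:Z + (n+1)%N%:Z * B%:Z = t * p%:Z ->
  A%:Z * A%:Z + A%:Z * B%:Z + B%:Z * B%:Z = (n*n+n+1)%N%:Z * K -> 0 < K <= 2 ->
  exists A B : nat, [/\ (0 < A)%N, (0 < B)%N, (A*A+A*B+B*B = n*n+n+1)%N,
     (M %| A + (n*n+1)*B)%N & (p %| A + (n+1)*B)%N].
Proof.
move=> A0 B0 hx hy hQ /andP [K1 K2].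
exists A, B; split=> //.
- have : (K = 1) \/ (K = 2) by lia.
  case=> eK; rewrite eK in hQ; first lia.
  exfalso; apply: (par (A:=A) (B:=B) (n:=n)); lia.
- have : (M%:Z %| (A + (n*n+1)*B)%N%:Z)%Z by apply/dvdzP; exists s; rewrite PoszD PoszM hx.
  by rewrite dvdzE.
- have : (p%:Z %| (A + (n+1)*B)%N%:Z)%Z by apply/dvdzP; exists t; rewrite PoszD PoszM hy.
  by rewrite dvdzE.
Qed.

Lemma core_int (n M p : nat) (x y : int) :
  (0 < n)%N -> (M * p = n*n+n+1)%N ->
  -(n%:Z) <= x <= n%:Z -> -(n%:Z) <= y <= n%:Z -> (x != 0) || (y != 0) ->
  (M%:Z %| x + (n*n+1)%N%:Z * y)%Z -> (p%:Z %| x + (n+1)%N%:Z * y)%Z ->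
  exists A B : nat, [/\ (0 < A)%N, (0 < B)%N, (A*A+A*B+B*B = n*n+n+1)%N,
     (M %| A + (n*n+1)*B)%N & (p %| A + (n+1)*B)%N].
Proof.
move=> n0 hN hxb hyb nz /dvdzP [s hx] /dvdzP [t hy].
have hQ := keyK hN hx hy.
move: hQ; set K := (_ - _ : int) => hQ; clearbody K.
have Qp := Qpos nz.
move: Qp; rewrite hQ => Qp.
have K1 : 0 < K.
  clear -Qp; nia.
have xy : 0 < x * y.
  rewrite ltNge; apply/negP => h.
  have := Qsmall hxb hyb h; rewrite hQ; clear -K1; nia.
have K2 : K <= 2.
  have := Qbig hxb hyb; rewrite hQ; clear; nia.
have KK : 0 < K <= 2 by rewrite K1 K2.
case: x hx hy hxb hyb nz xy hQ => A; case: y => B hx hy hxb hyb nz xy hQ.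
- have A0 : (0 < A)%N by clear -xy; nia.
  have B0 : (0 < B)%N by clear -xy; nia.
  exact: (fin A0 B0 hx hy hQ KK).
- exfalso; rewrite NegzE in xy; clear -xy; nia.
- exfalso; rewrite NegzE in xy; clear -xy; nia.
- rewrite !NegzE in hx hy hQ.
  have hx' : (A.+1)%:Z + (n*n+1)%N%:Z * (B.+1)%:Z = (-s) * M%:Z by rewrite mulNr -hx; ring.
  have hy' : (A.+1)%:Z + (n+1)%N%:Z * (B.+1)%:Z = (-t) * p%:Z by rewrite mulNr -hy; ring.
  have hQ' : (A.+1)%:Z * (A.+1)%:Z + (A.+1)%:Z * (B.+1)%:Z + (B.+1)%:Z * (B.+1)%:Z = (n*n+n+1)%N%:Z * K.
    by rewrite -hQ; ring.
  exact: (fin (ltn0Sn A) (ltn0Sn B) hx' hy' hQ' KK).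
Qed.

End S.

Lemma pigeon n M p : 0 < n -> 0 < M -> 0 < p -> M * p = n*n+n+1 ->
  exists u1 v1 u2 v2, [/\ u1 <= n, v1 <= n, u2 <= n & v2 <= n] /\ [/\
    (u1, v1) != (u2, v2),
    (u1 + (n*n+1)*v1) %% M = (u2 + (n*n+1)*v2) %% M &
    (u1 + (n+1)*v1) %% p = (u2 + (n+1)*v2) %% p].
Proof.
move=> n0 M0 p0 hN.
pose f (uv : 'I_n.+1 * 'I_n.+1) : 'I_M * 'I_p :=
  (Ordinal (ltn_pmod (uv.1 + (n*n+1)*uv.2) M0), Ordinal (ltn_pmod (uv.1 + (n+1)*uv.2) p0)).
case: (pickP (fun ij : ('I_n.+1 * 'I_n.+1) * ('I_n.+1 * 'I_n.+1) => (f ij.1 == f ij.2) && (ij.1 != ij.2))).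
- move=> [[u1 v1] [u2 v2]] /andP [/eqP e ne].
  exists u1, v1, u2, v2; split; first by split; rewrite -ltnS ltn_ord.
  split.
  + by apply: contra ne => /eqP [h1 h2]; apply/eqP; congr (_, _); apply: val_inj.
  + by have := congr1 (fun z => val z.1) e.
  + by have := congr1 (fun z => val z.2) e.
- move=> H; exfalso.
  have inj : injective f.
    move=> i j e; apply/eqP; apply/negPn/negP => ne.
    by have := H (i, j); rewrite /= e eqxx ne.
  have := leq_card f inj; rewrite !card_prod !card_ord hN.
  clear -n0; nia.
Qed.

Lemma construct n p r : 0 < n -> prime p -> prime r -> p != 3 -> r != 3 -> p * r %| n*n+n+1 ->
  exists a b, [/\ 0 < a, 0 < b, a*a+a*b+b*b = n*n+n+1 & ~ ((a, b) = (n, 1) \/ (a, b) = (1, n))].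
Proof.
move=> n0 pp pr p3 r3 hpr.
have pN : p %| n*n+n+1 by apply: dvdn_trans hpr; apply: dvdn_mulr.
have p0 : 0 < p by apply: prime_gt0.
have hN : (n*n+n+1) %/ p * p = n*n+n+1 by rewrite divnK.
move: hN; set M := (n*n+n+1) %/ p => hN; clearbody M.
have M0 : 0 < M by move: hN; case: (M) => //; rewrite mul0n addn1.
have rM : r %| M.
  by move: hpr; rewrite -hN mulnC dvdn_pmul2r.
have [u1 [v1 [u2 [v2 [[hu1 hv1 hu2 hv2] [ne e1 e2]]]]]] := pigeon n0 M0 p0 hN.
have hx : (M%:Z %| ((u1%:Z - u2%:Z) + (n*n+1)%N%:Z * (v1%:Z - v2%:Z))%R)%Z.
  have : ((u1 + (n*n+1)*v1)%N%:Z == (u2 + (n*n+1)*v2)%N%:Z %[mod M%:Z])%Z by rewrite !modz_nat e1.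
  rewrite eqz_mod_dvd.
  have -> : ((u1 + (n*n+1)*v1)%N%:Z - (u2 + (n*n+1)*v2)%N%:Z)%R
     = ((u1%:Z - u2%:Z) + (n*n+1)%N%:Z * (v1%:Z - v2%:Z))%R by rewrite !PoszD !PoszM; ring.
  done.
have hy : (p%:Z %| ((u1%:Z - u2%:Z) + (n+1)%N%:Z * (v1%:Z - v2%:Z))%R)%Z.
  have : ((u1 + (n+1)*v1)%N%:Z == (u2 + (n+1)*v2)%N%:Z %[mod p%:Z])%Z by rewrite !modz_nat e2.
  rewrite eqz_mod_dvd.
  have -> : ((u1 + (n+1)*v1)%N%:Z - (u2 + (n+1)*v2)%N%:Z)%R
     = ((u1%:Z - u2%:Z) + (n+1)%N%:Z * (v1%:Z - v2%:Z))%R by rewrite !PoszD !PoszM; ring.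
  done.
have bx : (-(n%:Z) <= u1%:Z - u2%:Z <= n%:Z)%R by clear -hu1 hu2; apply/andP; split; lia.
have byy : (-(n%:Z) <= v1%:Z - v2%:Z <= n%:Z)%R by clear -hv1 hv2; apply/andP; split; lia.
have nz : ((u1%:Z - u2%:Z)%R != 0%R) || ((v1%:Z - v2%:Z)%R != 0%R).
  rewrite -negb_and; apply: contra ne => /andP [/eqP h1 /eqP h2].
  apply/eqP; congr (_, _); clear -h1 h2; lia.
have [A [B [A0 B0 HQ hM hp]]] := core_int n0 hN bx byy nz hx hy.
exists A, B; split=> //; case=> [[eA eB] | [eA eB]]; subst A B.
- have h : p %| 3.
    have -> : 3 = 4 * (n*n+n+1) - (n + (n+1)*1) * (n + (n+1)*1) by clear; lia.
    apply: dvdn_sub; [exact: dvdn_mull pN | exact: dvdn_mulr hp].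
  by move: h; rewrite dvdn_prime2 // => /eqP h; rewrite h eqxx in p3.
- have rN : r %| n*n+n+1 by apply: dvdn_trans hpr; apply: dvdn_mull.
  have h1 : r %| 1 + (n*n+1)*n := dvdn_trans rM hM.
  have h2 : r %| n + 2.
    have -> : n + 2 = (1 + (n*n+1)*n + (n*n+n+1)) - n * (n*n+n+1) by clear; lia.
    apply: dvdn_sub; [exact: dvdn_add h1 rN | exact: dvdn_mull rN].
  have h : r %| 3.
    have -> : 3 = (n*n+n+1 + (n + 2)) - (n+2) * n by clear; lia.
    apply: dvdn_sub; [exact: dvdn_add rN h2 | exact: dvdn_mulr h2].
  by move: h; rewrite dvdn_prime2 // => /eqP h; rewrite h eqxx in r3.
Qed.

Theorem theorem3 (n : nat) : 0 < n ->
  (exists a b : nat,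
      [/\ 0 < a, 0 < b, a ^ 2 + a * b + b ^ 2 = n ^ 2 + n + 1
        & ~ ((a, b) = (n, 1) \/ (a, b) = (1, n))])
  <-> 2 <= count_1mod3_factors (n ^ 2 + n + 1).
Proof.
move=> n0.
have N0 : 0 < n*n+n+1 by rewrite addn1.
rewrite -mulnn; split.
- case=> a [b [a0 b0 H nt]].
  have H' : a*a+a*b+b*b = n*n+n+1 by rewrite !mulnn.
  case: (classic (exists p r, [/\ prime p, prime r, p != 3, r != 3 & p * r %| n*n+n+1])).
  + case=> p [r [pp pr p3 r3 d]].
    have pN : p %| n*n+n+1 by apply: dvdn_trans d; apply: dvdn_mulr.
    have rN : r %| n*n+n+1 by apply: dvdn_trans d; apply: dvdn_mull.
    exact: (count_ge2 N0 pp pr (prime_div_N pp pN p3) (prime_div_N pr rN r3) d).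
  + move=> nE.
    have NP : forall p r, prime p -> prime r -> p != 3 -> r != 3 -> ~~ (p * r %| n*n+n+1).
      move=> p r pp pr p3 r3; apply/negP => d; apply: nE; exists p, r; exact: (And5 pp pr p3 r3 d).
    have [m [q [E hm hq]]] := structure NP.
    case: (rep_trivial a0 b0 H' E hm hq) => [[ea eb]|[ea eb]]; exfalso; apply: nt; subst a b; [left|right]; reflexivity.
- move=> h2.
  have [p [r [pp pr p1 r1 d]]] := count_ge2_inv N0 h2.
  have p3 : p != 3 by apply/eqP => e; rewrite e in p1.
  have r3 : r != 3 by apply/eqP => e; rewrite e in r1.
  have [a [b [a0 b0 H nt]]] := construct n0 pp pr p3 r3 d.
  exists a, b; split => //; rewrite -!mulnn; exact: H.
Qed.
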